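(* Let $\mathcal{B}$ be the category described in the context, with parameters $\alpha,\beta,\kappa,\kappa'$ and $\theta=\alpha\beta\kappa\kappa'$, and let $u,v\in\mathbb{C}$. For $A,B\in\{X,X^*\}$ and a spectral parameter $z$, let $R_{AB}(z):A\otimes B\to B\otimes A$ be the Baxterized crossings defined in the context (with parameters $u$ in $R_{X^*X}$ and $v$ in $R_{XX^*}$). If $uv=-\theta$, then for every triple $A,B,C\in\{X,X^*\}$ not all equal (the ''mixed'' cases) the Yang–Baxter equation with spectral parameter $$(R_{BC}(w)\otimes\mathrm{id}_A)\circ(\mathrm{id}_B\otimes R_{AC}(zw))\circ(R_{AB}(z)\otimes\mathrm{id}_C)=(\mathrm{id}_C\otimes R_{AB}(z))\circ(R_{AC}(zw)\otimes\mathrm{id}_B)\circ(\mathrm{id}_A\otimes R_{BC}(w))$$ holds as an identity of morphisms $A\otimes B\otimes C\to C\otimes B\otimes A$ depending rationally on $z,w$.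
   Context: $\mathcal{B}$ is the $\mathbb{C}$-linear strict monoidal braided category whose objects are finite tensor words in $X$ and $X^*$, with braiding $c_{A,B}:A\otimes B\to B\otimes A$ and duality morphisms $\mathrm{ev}_{\bullet\circ}:X^*\otimes X\to\mathbf 1$, $\mathrm{ev}_{\circ\bullet}:X\otimes X^*\to\mathbf 1$, $\mathrm{coev}_{\bullet\circ}:\mathbf 1\to X^*\otimes X$, $\mathrm{coev}_{\circ\bullet}:\mathbf 1\to X\otimes X^*$ satisfying the zigzag identities (morphisms are linear combinations of tangles modulo isotopy), subject to: $c_{X,X}^2=-\alpha\beta\,\mathrm{id}+(\alpha+\beta)c_{X,X}$; $c_{X,X^*}\circ\mathrm{coev}_{\circ\bullet}=\kappa\,\mathrm{coev}_{\bullet\circ}$; $c_{X^*,X}\circ\mathrm{coev}_{\bullet\circ}=\kappa'\,\mathrm{coev}_{\circ\bullet}$; $\mathrm{ev}_{\circ\bullet}\circ\mathrm{coev}_{\circ\bullet}=\frac{\theta+1}{\kappa'(\alpha+\beta)}$, $\mathrm{ev}_{\bullet\circ}\circ\mathrm{coev}_{\bullet\circ}=\frac{\theta+1}{\kappa(\alpha+\beta)}$. Baxterized crossings: $R_{XX}(z)=c_{X,X}+\frac{\alpha+\beta}{z-1}\mathrm{id}_{X\otimes X}$, $R_{X^*X^*}(z)=c_{X^*,X^*}+\frac{\alpha+\beta}{z-1}\mathrm{id}_{X^*\otimes X^*}$, $R_{X^*X}(z)=c_{X^*,X}+\frac{\alpha+\beta}{\alpha\beta}\frac{u}{z-u}\,\mathrm{coev}_{\circ\bullet}\circ\mathrm{ev}_{\bullet\circ}$,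 $R_{XX^*}(z)=c_{X,X^*}+\frac{\alpha+\beta}{\alpha\beta}\frac{v}{z-v}\,\mathrm{coev}_{\bullet\circ}\circ\mathrm{ev}_{\circ\bullet}$. *)

(* Defs.v *)
From HB Require Import structures.
From mathcomp Require Import all_boot all_algebra.
From mathcomp Require Import complex Rstruct.
Set Implicit Arguments. Unset Strict Implicit. Unset Printing Implicit Defensive.
Import GRing.Theory.
Local Open Scope ring_scope.

Definition CC : fieldType := (Rdefinitions.R)[i].

(* Objects of B: finite tensor words in X and X^*;  true = X,  false = X^*.
   The unit object is [::] and the tensor product of objects is ++. *)
Notation obj := (seq bool).

Record BData := {
  Hom  : obj -> obj -> lmodType CC;
  cmp : forall a b d, Hom b d -> Hom a b -> Hom a d;
  idm  : forall a, Hom a a;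
  tens : forall a b a' b', Hom a b -> Hom a' b' -> Hom (a ++ a') (b ++ b');
  brd  : forall a b, Hom (a ++ b) (b ++ a);
  brdinv : forall a b, Hom (b ++ a) (a ++ b);
  ev_bw   : Hom [:: false; true] [::];
  ev_wb   : Hom [:: true; false] [::];
  coev_bw : Hom [::] [:: false; true];
  coev_wb : Hom [::] [:: true; false]
}.

Arguments cmp {_ _ _ _} _ _.
Arguments tens {_ _ _ _ _} _ _.

Definition castH (D : BData) (a a' b b' : obj) (ea : a = a') (eb : b = b')
    (f : Hom D a b) : Hom D a' b' :=
  eq_rect a (fun x => Hom D x b') (eq_rect b (fun y => Hom D a y) f b' eb) a' ea.

Definition braided_rigid_axioms (D : BData) : Prop :=
  (forall a b (f : Hom D a b), cmp (idm D b) f = f) /\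
  (forall a b (f : Hom D a b), cmp f (idm D a) = f) /\
  (forall a b d e (h : Hom D d e) (g : Hom D b d) (f : Hom D a b),
      cmp h (cmp g f) = cmp (cmp h g) f) /\
  (forall a b d (k : CC) (g g' : Hom D b d) (f : Hom D a b),
      cmp (k *: g + g') f = k *: cmp g f + cmp g' f) /\
  (forall a b d (k : CC) (g : Hom D b d) (f f' : Hom D a b),
      cmp g (k *: f + f') = k *: cmp g f + cmp g f') /\
  (forall a b, tens (idm D a) (idm D b) = idm D (a ++ b)) /\
  (forall a b d a' b' d' (g : Hom D b d) (f : Hom D a b)
          (g' : Hom D b' d') (f' : Hom D a' b'),
      tens (cmp g f) (cmp g' f') = cmp (tens g g') (tens f f')) /\
  (forall a b (f : Hom D a b), tens (idm D [::]) f = f) /\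
  (forall a b (f : Hom D a b), castH (cats0 a) (cats0 b) (tens f (idm D [::])) = f) /\
  (forall a b a' b' a'' b'' (f : Hom D a b) (f' : Hom D a' b') (f'' : Hom D a'' b''),
      castH (catA a a' a'') (catA b b' b'') (tens f (tens f' f''))
      = tens (tens f f') f'') /\
  (forall a b a' b' (k : CC) (f g : Hom D a b) (h : Hom D a' b'),
      tens (k *: f + g) h = k *: tens f h + tens g h) /\
  (forall a b a' b' (k : CC) (h : Hom D a b) (f g : Hom D a' b'),
      tens h (k *: f + g) = k *: tens h f + tens h g) /\
  (forall a b, cmp (brdinv D a b) (brd D a b) = idm D (a ++ b)) /\
  (forall a b, cmp (brd D a b) (brdinv D a b) = idm D (b ++ a)) /\
  (forall a b a' b' (f : Hom D a b) (g : Hom D a' b'),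
      cmp (brd D b b') (tens f g) = cmp (tens g f) (brd D a a')) /\
  (forall a b d,
      brd D a (b ++ d) =
      castH erefl (catA b d a)
        (cmp (tens (idm D b) (brd D a d))
              (castH (esym (catA a b d)) (esym (catA b a d)) (tens (brd D a b) (idm D d))))) /\
  (forall a b d,
      brd D (a ++ b) d =
      castH erefl (esym (catA d a b))
        (cmp (tens (brd D a d) (idm D b))
              (castH (catA a b d) (catA a d b) (tens (idm D a) (brd D b d))))) /\
  cmp (tens (idm D [:: true]) (ev_bw D)) (tens (coev_wb D) (idm D [:: true])) = idm D [:: true] /\
  cmp (tens (ev_bw D) (idm D [:: false])) (tens (idm D [:: false]) (coev_wb D)) = idm D [:: false] /\
  cmp (tens (ev_wb D) (idm D [:: true])) (tens (idm D [:: true]) (coev_bw D)) = idm D [:: true] /\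
  cmp (tens (idm D [:: false]) (ev_wb D)) (tens (coev_bw D) (idm D [:: false])) = idm D [:: false].

Definition B_relations (D : BData) (alpha beta kappa kappa' : CC) : Prop :=
  let theta := alpha * beta * kappa * kappa' in
  cmp (brd D [:: true] [:: true]) (brd D [:: true] [:: true])
    = (- (alpha * beta)) *: idm D [:: true; true]
      + (alpha + beta) *: brd D [:: true] [:: true] /\
  cmp (brd D [:: true] [:: false]) (coev_wb D) = kappa *: (coev_bw D) /\
  cmp (brd D [:: false] [:: true]) (coev_bw D) = kappa' *: (coev_wb D) /\
  cmp (ev_wb D) (coev_wb D) = ((theta + 1) / (kappa' * (alpha + beta))) *: idm D [::] /\
  cmp (ev_bw D) (coev_bw D) = ((theta + 1) / (kappa * (alpha + beta))) *: idm D [::].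

(* A model of B: a category satisfying all of the above.  B itself is the
   initial (free) such category. *)
Definition isB (D : BData) (alpha beta kappa kappa' : CC) : Prop :=
  braided_rigid_axioms D /\ B_relations D alpha beta kappa kappa'.

Definition Rbax (D : BData) (alpha beta u v : CC) (a b : bool) (z : CC)
    : Hom D [:: a; b] [:: b; a] :=
  brd D [:: a] [:: b] +
  match a as a0, b as b0 return Hom D [:: a0; b0] [:: b0; a0] with
  | true, true   => ((alpha + beta) / (z - 1)) *: idm D [:: true; true]
  | false, false => ((alpha + beta) / (z - 1)) *: idm D [:: false; false]
  | false, true  => ((alpha + beta) / (alpha * beta) * (u / (z - u)))
                      *: cmp (coev_wb D) (ev_bw D)
  | true, false  => ((alpha + beta) / (alpha * beta) * (v / (z - v)))
                      *: cmp (coev_bw D) (ev_wb D)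
  end.

Definition Rpole (u v : CC) (a b : bool) : CC :=
  if a == b then 1 else if a then v else u.

(* Main.v *)
Require Import Defs.
From HB Require Import structures.
From mathcomp Require Import all_boot all_algebra.
From mathcomp Require Import complex Rstruct.
From mathcomp Require Import ring.
Import Defs.
Set Implicit Arguments. Unset Strict Implicit. Unset Printing Implicit Defensive.
Import GRing.Theory.
Local Open Scope ring_scope.

Inductive lexp := LV of nat | LA of lexp & lexp | LS of CC & lexp | LZ.

Fixpoint leval (V : lmodType CC) (bs : seq V) (x : lexp) : V :=
  match x with
  | LV j => nth 0 bs j
  | LA x1 x2 => leval bs x1 + leval bs x2
  | LS k x1 => k *: leval bs x1
  | LZ => 0
  end.

Fixpoint lcoef (x : lexp) (i : nat) : CC :=
  match x with
  | LV j => (j == i)%:R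
  | LA x1 x2 => lcoef x1 i + lcoef x2 i
  | LS k x1 => k * lcoef x1 i
  | LZ => 0
  end.

Lemma leval_sum (V : lmodType CC) (bs : seq V) x :
  leval bs x = \sum_(i < size bs) lcoef x i *: bs`_i.
Proof.
elim: x => [j|x1 IH1 x2 IH2|k x1 IH|] /=.
- case: (ltnP j (size bs)) => Hj.
    rewrite (bigD1 (Ordinal Hj)) //= eqxx scale1r big1 ?addr0 // => i Hi.
    by rewrite eq_sym -(inj_eq val_inj) /= in Hi; rewrite (negbTE Hi) scale0r.
  rewrite nth_default // big1 // => i _.
  have : j != i by rewrite neq_ltn (leq_trans (ltn_ord i) Hj) orbT.
  by move/negbTE ->; rewrite scale0r.
- by rewrite IH1 IH2 -big_split /=; apply: eq_bigr => i _; rewrite scalerDl.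
- by rewrite IH scaler_sumr; apply: eq_bigr => i _; rewrite scalerA.
- by rewrite big1 // => i _; rewrite scale0r.
Qed.

Lemma leval_eq (V : lmodType CC) (bs : seq V) x y :
  (forall i, (i < size bs)%N -> lcoef x i = lcoef y i) -> leval bs x = leval bs y.
Proof.
move=> H; rewrite !leval_sum; apply: eq_bigr => i _; by rewrite H.
Qed.

Ltac lookup t l n :=
  lazymatch l with
  | (?h :: ?tl) => lazymatch t with h => constr:(n) | _ => lookup t tl (S n) end
  end.

Ltac reify t l :=
  lazymatch t with
  | ?x + ?y => let a := reify x l in let b := reify y l in constr:(LA a b)
  | ?k *: ?x => let a := reify x l in constr:(LS k a)
  | 0 => constr:(LZ)
  | _ => let n := lookup t l O in constr:(LV n)
  end.

Ltac lin_reify l :=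
  lazymatch goal with |- ?L = ?R =>
    let a := reify L l in let b := reify R l in
    change (leval l a = leval l b); apply: leval_eq
  end.

Module P1.
Lemma castH_refl (D : BData) (a b : obj) (e1 : a = a) (e2 : b = b) (f : Hom D a b) :
  castH e1 e2 f = f.
Proof. by rewrite /castH (eq_axiomK e1) (eq_axiomK e2). Qed.

Lemma selfadd0 (V : zmodType) (x : V) : x = x + x -> x = 0.
Proof. by move=> H; apply: (addrI x); rewrite addr0 -H. Qed.

Section Basics.
Variables (D : BData) (alpha beta kappa kappa' : CC).
Hypothesis HB : isB D alpha beta kappa kappa'.

Local Notation "g '∘' f" := (cmp g f) (at level 46, right associativity).
Local Notation "f '⊗' g" := (tens f g) (at level 35).
Local Notation I x := (idm D [:: x]).

Lemma cmp1l a b (f : Hom D a b) : idm D b ∘ f = f.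
Proof. by case: HB => [[h' _] _]; apply: h'. Qed.
Lemma cmp1r a b (f : Hom D a b) : f ∘ idm D a = f.
Proof. by case: HB => [[_ [h' _]] _]; apply: h'. Qed.
Lemma cmpA a b d e (h : Hom D d e) (g : Hom D b d) (f : Hom D a b) :
  h ∘ (g ∘ f) = (h ∘ g) ∘ f.
Proof. by case: HB => [[_ [_ [h' _]]] _]; apply: h'. Qed.
Lemma cmpLl a b d (k : CC) (g g' : Hom D b d) (f : Hom D a b) :
  (k *: g + g') ∘ f = k *: (g ∘ f) + g' ∘ f.
Proof. by case: HB => [[_ [_ [_ [h' _]]]] _]; apply: h'. Qed.
Lemma cmpLr a b d (k : CC) (g : Hom D b d) (f f' : Hom D a b) :
  g ∘ (k *: f + f') = k *: (g ∘ f) + g ∘ f'.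
Proof. by case: HB => [[_ [_ [_ [_ [h' _]]]]] _]; apply: h'. Qed.
Lemma tens11 a b : idm D a ⊗ idm D b = idm D (a ++ b).
Proof. by case: HB => [[_ [_ [_ [_ [_ [h' _]]]]]] _]; apply: h'. Qed.
Lemma tensM a b d a' b' d' (g : Hom D b d) (f : Hom D a b)
          (g' : Hom D b' d') (f' : Hom D a' b') :
      (g ∘ f) ⊗ (g' ∘ f') = (g ⊗ g') ∘ (f ⊗ f').
Proof. by case: HB => [[_ [_ [_ [_ [_ [_ [h' _]]]]]]] _]; apply: h'. Qed.
Lemma tens0l a b (f : Hom D a b) : idm D [::] ⊗ f = f.
Proof. by case: HB => [[_ [_ [_ [_ [_ [_ [_ [h' _]]]]]]]] _]; apply: h'. Qed.
Lemma tens0r_ax a b (f : Hom D a b) : castH (cats0 a) (cats0 b) (f ⊗ idm D [::]) = f.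
Proof. by case: HB => [[_ [_ [_ [_ [_ [_ [_ [_ [h' _]]]]]]]]] _]; apply: h'. Qed.
Lemma tensA_ax a b a' b' a'' b'' (f : Hom D a b) (f' : Hom D a' b') (f'' : Hom D a'' b'') :
      castH (catA a a' a'') (catA b b' b'') (f ⊗ (f' ⊗ f''))
      = (f ⊗ f') ⊗ f''.
Proof. by case: HB => [[_ [_ [_ [_ [_ [_ [_ [_ [_ [h' _]]]]]]]]]] _]; apply: h'. Qed.
Lemma tensLl a b a' b' (k : CC) (f g : Hom D a b) (h : Hom D a' b') :
      (k *: f + g) ⊗ h = k *: (f ⊗ h) + g ⊗ h.
Proof. by case: HB => [[_ [_ [_ [_ [_ [_ [_ [_ [_ [_ [h' _]]]]]]]]]]] _]; apply: h'. Qed.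
Lemma tensLr a b a' b' (k : CC) (h : Hom D a b) (f g : Hom D a' b') :
      h ⊗ (k *: f + g) = k *: (h ⊗ f) + h ⊗ g.
Proof. by case: HB => [[_ [_ [_ [_ [_ [_ [_ [_ [_ [_ [_ [h' _]]]]]]]]]]]] _]; apply: h'. Qed.
Lemma brdK a b : brdinv D a b ∘ brd D a b = idm D (a ++ b).
Proof. by case: HB => [[_ [_ [_ [_ [_ [_ [_ [_ [_ [_ [_ [_ [h' _]]]]]]]]]]]]] _]; apply: h'. Qed.
Lemma brdKV a b : brd D a b ∘ brdinv D a b = idm D (b ++ a).
Proof. by case: HB => [[_ [_ [_ [_ [_ [_ [_ [_ [_ [_ [_ [_ [_ [h' _]]]]]]]]]]]]]] _]; apply: h'. Qed.
Lemma brdN a b a' b' (f : Hom D a b) (g : Hom D a' b') :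
      brd D b b' ∘ (f ⊗ g) = (g ⊗ f) ∘ brd D a a'.
Proof. by case: HB => [[_ [_ [_ [_ [_ [_ [_ [_ [_ [_ [_ [_ [_ [_ [h' _]]]]]]]]]]]]]]] _]; apply: h'. Qed.
Lemma hex1 x y z : brd D [:: x] [:: y; z] = (I y ⊗ brd D [:: x] [:: z]) ∘ (brd D [:: x] [:: y] ⊗ I z).
Proof.
case: HB => [[_ [_ [_ [_ [_ [_ [_ [_ [_ [_ [_ [_ [_ [_ [_ [h' _]]]]]]]]]]]]]]]] _].
by rewrite (h' [:: x] [:: y] [:: z]) !castH_refl.
Qed.
Lemma hex2 x y z : brd D [:: x; y] [:: z] = (brd D [:: x] [:: z] ⊗ I y) ∘ (I x ⊗ brd D [:: y] [:: z]).
Proof.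
case: HB => [[_ [_ [_ [_ [_ [_ [_ [_ [_ [_ [_ [_ [_ [_ [_ [_ [h' _]]]]]]]]]]]]]]]]] _].
by rewrite (h' [:: x] [:: y] [:: z]) !castH_refl.
Qed.
Lemma zig1 : (I true ⊗ ev_bw D) ∘ (coev_wb D ⊗ I true) = I true.
Proof. by case: HB => [[_ [_ [_ [_ [_ [_ [_ [_ [_ [_ [_ [_ [_ [_ [_ [_ [_ [h' _]]]]]]]]]]]]]]]]]] _]; exact: h'. Qed.
Lemma zig2 : (ev_bw D ⊗ I false) ∘ (I false ⊗ coev_wb D) = I false.
Proof. by case: HB => [[_ [_ [_ [_ [_ [_ [_ [_ [_ [_ [_ [_ [_ [_ [_ [_ [_ [_ [h' _]]]]]]]]]]]]]]]]]]] _]; exact: h'. Qed.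
Lemma zig3 : (ev_wb D ⊗ I true) ∘ (I true ⊗ coev_bw D) = I true.
Proof. by case: HB => [[_ [_ [_ [_ [_ [_ [_ [_ [_ [_ [_ [_ [_ [_ [_ [_ [_ [_ [_ [h' _]]]]]]]]]]]]]]]]]]]] _]; exact: h'. Qed.
Lemma zig4 : (I false ⊗ ev_wb D) ∘ (coev_bw D ⊗ I false) = I false.
Proof. by case: HB => [[_ [_ [_ [_ [_ [_ [_ [_ [_ [_ [_ [_ [_ [_ [_ [_ [_ [_ [_ [_ h']]]]]]]]]]]]]]]]]]]] _]; exact: h'. Qed.


Lemma cmpDl a b d (g g' : Hom D b d) (f : Hom D a b) : (g + g') ∘ f = g ∘ f + g' ∘ f.
Proof. by have := cmpLl 1 g g' f; rewrite !scale1r. Qed.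
Lemma cmp0l a b d (f : Hom D a b) : (0 : Hom D b d) ∘ f = 0.
Proof. by have := @cmpDl a b d 0 0 f; rewrite addr0; exact: selfadd0. Qed.
Lemma cmpZl a b d k (g : Hom D b d) (f : Hom D a b) : (k *: g) ∘ f = k *: (g ∘ f).
Proof. by have := cmpLl k g 0 f; rewrite !addr0 cmp0l addr0. Qed.
Lemma cmpDr a b d (g : Hom D b d) (f f' : Hom D a b) : g ∘ (f + f') = g ∘ f + g ∘ f'.
Proof. by have := cmpLr 1 g f f'; rewrite !scale1r. Qed.
Lemma cmp0r a b d (g : Hom D b d) : g ∘ (0 : Hom D a b) = 0.
Proof. by have := @cmpDr a b d g 0 0; rewrite addr0; exact: selfadd0. Qed.
Lemma cmpZr a b d k (g : Hom D b d) (f : Hom D a b) : g ∘ (k *: f) = k *: (g ∘ f).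
Proof. by have := cmpLr k g f 0; rewrite !addr0 cmp0r addr0. Qed.
Lemma cmpNl a b d (g : Hom D b d) (f : Hom D a b) : (- g) ∘ f = - (g ∘ f).
Proof. by rewrite -scaleN1r cmpZl scaleN1r. Qed.
Lemma cmpNr a b d (g : Hom D b d) (f : Hom D a b) : g ∘ (- f) = - (g ∘ f).
Proof. by rewrite -scaleN1r cmpZr scaleN1r. Qed.
Lemma cmpBl a b d (g g' : Hom D b d) (f : Hom D a b) : (g - g') ∘ f = g ∘ f - g' ∘ f.
Proof. by rewrite cmpDl cmpNl. Qed.
Lemma cmpBr a b d (g : Hom D b d) (f f' : Hom D a b) : g ∘ (f - f') = g ∘ f - g ∘ f'.
Proof. by rewrite cmpDr cmpNr. Qed.

Lemma tensDl a b a' b' (f g : Hom D a b) (h : Hom D a' b') : (f + g) ⊗ h = f ⊗ h + g ⊗ h.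
Proof. by have := tensLl 1 f g h; rewrite !scale1r. Qed.
Lemma tens0l' a b a' b' (h : Hom D a' b') : (0 : Hom D a b) ⊗ h = 0.
Proof. by have := @tensDl a b a' b' 0 0 h; rewrite addr0; exact: selfadd0. Qed.
Lemma tensZl a b a' b' k (f : Hom D a b) (h : Hom D a' b') : (k *: f) ⊗ h = k *: (f ⊗ h).
Proof. by have := tensLl k f 0 h; rewrite !addr0 tens0l' addr0. Qed.
Lemma tensDr a b a' b' (h : Hom D a b) (f g : Hom D a' b') : h ⊗ (f + g) = h ⊗ f + h ⊗ g.
Proof. by have := tensLr 1 h f g; rewrite !scale1r. Qed.
Lemma tens0r' a b a' b' (h : Hom D a b) : h ⊗ (0 : Hom D a' b') = 0.
Proof. by have := @tensDr a b a' b' h 0 0; rewrite addr0; exact: selfadd0. Qed.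
Lemma tensZr a b a' b' k (h : Hom D a b) (f : Hom D a' b') : h ⊗ (k *: f) = k *: (h ⊗ f).
Proof. by have := tensLr k h f 0; rewrite !addr0 tens0r' addr0. Qed.
Lemma tensNl a b a' b' (f : Hom D a b) (h : Hom D a' b') : (- f) ⊗ h = - (f ⊗ h).
Proof. by rewrite -scaleN1r tensZl scaleN1r. Qed.
Lemma tensNr a b a' b' (h : Hom D a b) (f : Hom D a' b') : h ⊗ (- f) = - (h ⊗ f).
Proof. by rewrite -scaleN1r tensZr scaleN1r. Qed.
Lemma tensBl a b a' b' (f g : Hom D a b) (h : Hom D a' b') : (f - g) ⊗ h = f ⊗ h - g ⊗ h.
Proof. by rewrite tensDl tensNl. Qed.
Lemma tensBr a b a' b' (h : Hom D a b) (f g : Hom D a' b') : h ⊗ (f - g) = h ⊗ f - h ⊗ g.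
Proof. by rewrite tensDr tensNr. Qed.

Lemma tensMl a b d a' (g : Hom D b d) (f : Hom D a b) :
  (g ∘ f) ⊗ idm D a' = (g ⊗ idm D a') ∘ (f ⊗ idm D a').
Proof. by rewrite -tensM cmp1l. Qed.
Lemma tensMr a b d a' (g : Hom D b d) (f : Hom D a b) :
  idm D a' ⊗ (g ∘ f) = (idm D a' ⊗ g) ∘ (idm D a' ⊗ f).
Proof. by rewrite -tensM cmp1l. Qed.
Lemma interchange a b a' b' (f : Hom D a b) (g : Hom D a' b') :
  (f ⊗ idm D b') ∘ (idm D a ⊗ g) = (idm D b ⊗ g) ∘ (f ⊗ idm D a').
Proof. by rewrite -!tensM !cmp1l !cmp1r. Qed.

Lemma brd_nil_r x : brd D [:: x] [::] = I x.
Proof.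
case: HB => [[_ [_ [_ [_ [_ [_ [_ [_ [_ [_ [_ [_ [_ [_ [_ [h' _]]]]]]]]]]]]]]]] _].
have := h' [:: x] [::] [::]; rewrite !castH_refl tens0l.
have := tens0r_ax (brd D [:: x] [::]); rewrite castH_refl => ->.
move=> H. have H' : brd D [:: x] [::] = brd D [:: x] [::] ∘ brd D [:: x] [::] := H.
have E : brdinv D [:: x] [::] ∘ brd D [:: x] [::] = I x := brdK [:: x] [::].
by rewrite -[LHS]cmp1l -E -cmpA -H' E.
Qed.
Lemma brd_nil_l x : brd D [::] [:: x] = I x.
Proof.
case: HB => [[_ [_ [_ [_ [_ [_ [_ [_ [_ [_ [_ [_ [_ [_ [_ [_ [h' _]]]]]]]]]]]]]]]]] _].
have := h' [::] [::] [:: x]; rewrite !castH_refl tens0l.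
have := tens0r_ax (brd D [::] [:: x]); rewrite castH_refl => ->.
move=> H. have H' : brd D [::] [:: x] = brd D [::] [:: x] ∘ brd D [::] [:: x] := H.
have E : brdinv D [::] [:: x] ∘ brd D [::] [:: x] = I x := brdK [::] [:: x].
by rewrite -[LHS]cmp1l -E -cmpA -H' E.
Qed.

Lemma capL x y z (ev : Hom D [:: x; y] [::]) :
  ev ⊗ I z = (I z ⊗ ev) ∘ (brd D [:: x] [:: z] ⊗ I y) ∘ (I x ⊗ brd D [:: y] [:: z]).
Proof.
have := brdN ev (I z); rewrite brd_nil_l cmp1l hex2 => ->; done.
Qed.
Lemma capR x y z (ev : Hom D [:: x; y] [::]) :
  I z ⊗ ev = (ev ⊗ I z) ∘ (I x ⊗ brd D [:: z] [:: y]) ∘ (brd D [:: z] [:: x] ⊗ I y).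
Proof.
have := brdN (I z) ev; rewrite brd_nil_r cmp1l hex1 => ->; done.
Qed.
Lemma cupL x y z (co : Hom D [::] [:: x; y]) :
  (brd D [:: x] [:: z] ⊗ I y) ∘ (I x ⊗ brd D [:: y] [:: z]) ∘ (co ⊗ I z) = I z ⊗ co.
Proof.
have := brdN co (I z); rewrite brd_nil_l cmp1r hex2 -cmpA => ->; done.
Qed.
Lemma cupR x y z (co : Hom D [::] [:: x; y]) :
  (I x ⊗ brd D [:: z] [:: y]) ∘ (brd D [:: z] [:: x] ⊗ I y) ∘ (I z ⊗ co) = co ⊗ I z.
Proof.
have := brdN (I z) co; rewrite brd_nil_r cmp1r hex1 -cmpA => ->; done.
Qed.

End Basics.

End P1.
Import P1.

Module P2.
Lemma solve_lin (V : lmodType CC) (x y z : V) (k : CC) : k != 0 ->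
  y = z + (- k) *: x -> x = k^-1 *: z + (- k^-1) *: y.
Proof.
move=> Hk ->; rewrite scalerDr !scalerA mulrNN mulVf // scale1r addrA.
by rewrite -scalerDl subrr scale0r add0r.
Qed.

Lemma lin2 (V : lmodType CC) (a b k : CC) (v : V) : a + b = k -> a *: v + b *: v = k *: v.
Proof. by move=> <-; rewrite scalerDl. Qed.

Section Derived.
Variables (D : BData) (alpha beta kappa kappa' : CC).
Hypothesis HB : isB D alpha beta kappa kappa'.
Hypotheses (Ha : alpha != 0) (Hb : beta != 0) (Hk : kappa != 0) (Hk' : kappa' != 0)
  (Hs : alpha + beta != 0).

Local Notation "g '∘' f" := (cmp g f) (at level 46, right associativity).
Local Notation "f '⊗' g" := (tens f g) (at level 35).
Local Notation I x := (idm D [:: x]).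
Local Notation c := (brd D [:: true] [:: true]).
Local Notation d := (brd D [:: true] [:: false]).
Local Notation e := (brd D [:: false] [:: true]).
Local Notation f := (brd D [:: false] [:: false]).
Local Notation ci := (brdinv D [:: true] [:: true]).
Local Notation di := (brdinv D [:: true] [:: false]).
Local Notation ei := (brdinv D [:: false] [:: true]).
Local Notation fi := (brdinv D [:: false] [:: false]).
Local Notation P := (coev_bw D).
Local Notation Q := (coev_wb D).
Local Notation pe := (ev_bw D).
Local Notation qe := (ev_wb D).
Local Notation s := (alpha + beta).
Local Notation t := (alpha * beta).

Local Notation cmp1l := (P1.cmp1l HB).
Local Notation cmp1r := (P1.cmp1r HB).
Local Notation cmpA := (P1.cmpA HB).
Local Notation cmpLl := (P1.cmpLl HB).
Local Notation cmpLr := (P1.cmpLr HB).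
Local Notation tens11 := (P1.tens11 HB).
Local Notation tensM := (P1.tensM HB).
Local Notation tens0l := (P1.tens0l HB).
Local Notation tens0r_ax := (P1.tens0r_ax HB).
Local Notation tensA_ax := (P1.tensA_ax HB).
Local Notation tensLl := (P1.tensLl HB).
Local Notation tensLr := (P1.tensLr HB).
Local Notation brdK := (P1.brdK HB).
Local Notation brdKV := (P1.brdKV HB).
Local Notation brdN := (P1.brdN HB).
Local Notation hex1 := (P1.hex1 HB).
Local Notation hex2 := (P1.hex2 HB).
Local Notation zig1 := (P1.zig1 HB).
Local Notation zig2 := (P1.zig2 HB).
Local Notation zig3 := (P1.zig3 HB).
Local Notation zig4 := (P1.zig4 HB).
Local Notation cmpDl := (P1.cmpDl HB).
Local Notation cmp0l := (P1.cmp0l HB).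
Local Notation cmpZl := (P1.cmpZl HB).
Local Notation cmpDr := (P1.cmpDr HB).
Local Notation cmp0r := (P1.cmp0r HB).
Local Notation cmpZr := (P1.cmpZr HB).
Local Notation cmpNl := (P1.cmpNl HB).
Local Notation cmpNr := (P1.cmpNr HB).
Local Notation cmpBl := (P1.cmpBl HB).
Local Notation cmpBr := (P1.cmpBr HB).
Local Notation tensDl := (P1.tensDl HB).
Local Notation tens0l' := (P1.tens0l' HB).
Local Notation tensZl := (P1.tensZl HB).
Local Notation tensDr := (P1.tensDr HB).
Local Notation tens0r' := (P1.tens0r' HB).
Local Notation tensZr := (P1.tensZr HB).
Local Notation tensNl := (P1.tensNl HB).
Local Notation tensNr := (P1.tensNr HB).
Local Notation tensBl := (P1.tensBl HB).
Local Notation tensBr := (P1.tensBr HB).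
Local Notation tensMl := (P1.tensMl HB).
Local Notation tensMr := (P1.tensMr HB).
Local Notation interchange := (P1.interchange HB).
Local Notation brd_nil_r := (P1.brd_nil_r HB).
Local Notation brd_nil_l := (P1.brd_nil_l HB).
Local Notation capL := (P1.capL HB).
Local Notation capR := (P1.capR HB).
Local Notation cupL := (P1.cupL HB).
Local Notation cupR := (P1.cupR HB).

Ltac tM := match goal with |- context [cmp (tens ?g ?g') (tens ?f ?f')] => rewrite -(tensM g f g' f') end.
Ltac tMg G := match goal with |- context [cmp (tens G ?g') (tens ?f ?f')] => rewrite -(tensM G f g' f') end.
Ltac tMg' G := match goal with |- context [cmp (tens ?g G) (tens ?f ?f')] => rewrite -(tensM g f G f') end.
Ltac tAr := match goal with |- context [tens (tens ?f ?f') ?f''] => rewrite -(tensA_ax f f' f'') castH_refl end.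
Ltac tAl := match goal with |- context [tens ?f (tens ?f' ?f'')] => rewrite (tensA_ax f f' f'') castH_refl end.

Lemma Hc : c ∘ c = (- t) *: idm D [:: true; true] + s *: c.
Proof. by move: HB; rewrite /isB /B_relations /= => -[_ [h _]]. Qed.
Lemma dQ : d ∘ Q = kappa *: P.
Proof. by move: HB; rewrite /isB /B_relations /= => -[_ [_ [h _]]]. Qed.
Lemma eP : e ∘ P = kappa' *: Q.
Proof. by move: HB; rewrite /isB /B_relations /= => -[_ [_ [_ [h _]]]]. Qed.
Lemma qQ : qe ∘ Q = ((alpha * beta * kappa * kappa' + 1) / (kappa' * (alpha + beta))) *: idm D [::].
Proof. by move: HB; rewrite /isB /B_relations /= => -[_ [_ [_ [_ [h _]]]]]. Qed.
Lemma pP : pe ∘ P = ((alpha * beta * kappa * kappa' + 1) / (kappa * (alpha + beta))) *: idm D [::].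
Proof. by move: HB; rewrite /isB /B_relations /= => -[_ [_ [_ [_ [_ h]]]]]. Qed.

Lemma brdK1 x y : brdinv D [:: x] [:: y] ∘ brd D [:: x] [:: y] = idm D [:: x; y].
Proof. exact: brdK. Qed.
Lemma brdKV1 x y : brd D [:: x] [:: y] ∘ brdinv D [:: x] [:: y] = idm D [:: y; x].
Proof. exact: brdKV. Qed.

Lemma tt_neq0 : t != 0. Proof. by rewrite mulf_neq0. Qed.

Lemma ci_hecke : ci = (s / t) *: idm D [:: true; true] + (- t^-1) *: c.
Proof.
have H : c = (- t) *: ci + s *: idm D [:: true; true].
  have := congr1 (cmp ci) Hc; rewrite cmpA brdK1 cmp1l => ->.
  by rewrite cmpDr !cmpZr brdK1 cmp1r addrC.
rewrite [in RHS]H scalerDr !scalerA mulrNN mulVf ?tt_neq0 // scale1r addrCA -scalerDl.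
have -> : s / t + - t^-1 * s = 0 by ring.
by rewrite scale0r addr0.
Qed.

Lemma c_lin : c = s *: idm D [:: true; true] + (- t) *: ci.
Proof.
have := congr1 (cmp ci) Hc; rewrite cmpA brdK1 cmp1l => ->.
by rewrite cmpDr !cmpZr brdK1 cmp1r addrC.
Qed.

Definition Psi Y (y : Hom D [:: Y; true] [:: true; Y]) : Hom D [:: false; Y] [:: Y; false] :=
  ((pe ⊗ I Y) ⊗ I false) ∘ ((I false ⊗ y) ⊗ I false) ∘ (idm D [:: false; Y] ⊗ Q).

Lemma Psi_spec Y (x : Hom D [:: false; Y] [:: Y; false]) (y : Hom D [:: Y; true] [:: true; Y]) :
 (I Y ⊗ pe) ∘ (x ⊗ I true) = (pe ⊗ I Y) ∘ (I false ⊗ y) -> x = Psi y.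
Proof.
move=> H.
have E1 : ((x ⊗ I true) ⊗ I false) ∘ (idm D [:: false; Y] ⊗ Q) = (idm D [:: Y; false] ⊗ Q) ∘ x.
  have := tens0r_ax x; rewrite castH_refl => Ex.
  tAr; rewrite tens11; tM; rewrite cmp1l cmp1r.
  by rewrite -[in RHS]Ex; tM; rewrite cmp1l cmp1r.
have E2 : ((I Y ⊗ pe) ⊗ I false) ∘ (idm D [:: Y; false] ⊗ Q) = idm D [:: Y; false].
  tAr; rewrite -(tens11 [:: Y] [:: false]); tAr.
  by tM; rewrite cmp1l zig2 tens11.
rewrite /Psi cmpA; tM; rewrite cmp1l -H tensMl -cmpA E1 cmpA E2 cmp1l //.
Qed.

Lemma Psi_lin Y k (y y' : Hom D [:: Y; true] [:: true; Y]) :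
  Psi (k *: y + y') = k *: Psi y + Psi y'.
Proof. by rewrite /Psi tensLr tensLl cmpLl cmpLr. Qed.

Lemma Psi_D Y (y y' : Hom D [:: Y; true] [:: true; Y]) : Psi (y + y') = Psi y + Psi y'.
Proof. by have := Psi_lin 1 y y'; rewrite !scale1r. Qed.
Lemma Psi_Z Y k (y : Hom D [:: Y; true] [:: true; Y]) : Psi (k *: y) = k *: Psi y.
Proof. by rewrite /Psi tensZr tensZl cmpZl cmpZr. Qed.

Lemma Psi_id : Psi (idm D [:: true; true]) = Q ∘ pe.
Proof.
rewrite /Psi tens11 tens11 cmp1l.
have := tens0r_ax pe; rewrite castH_refl => Ep.
tAr; rewrite tens11; tM; rewrite cmp1l cmp1r.
by rewrite -[in RHS]Ep -[in RHS](tens0l Q); tM; rewrite cmp1l cmp1r.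
Qed.

Lemma e_Psi : e = Psi ci.
Proof.
apply: Psi_spec.
have := capL true pe; move=> ->.
by rewrite -!cmpA -tensMr brdKV1 tens11 cmp1r.
Qed.

Lemma di_Psi : di = Psi c.
Proof.
apply: Psi_spec.
have := capR true pe.
move=> H. rewrite H -!cmpA; tM; rewrite brdKV1 cmp1l tens11 cmp1r //.
Qed.

Lemma skein1 : di = s *: (Q ∘ pe) + (- t) *: e.
Proof. by rewrite di_Psi c_lin Psi_D !Psi_Z Psi_id e_Psi. Qed.

Lemma f_Psi : f = Psi di.
Proof.
apply: Psi_spec.
have := capL false pe; move=> ->.
by rewrite -!cmpA; tM; rewrite brdKV1 cmp1l tens11 cmp1r.
Qed.

Lemma fi_Psi : fi = Psi e.
Proof.
apply: Psi_spec.
have := capR false pe.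
move=> H. rewrite H -!cmpA; tM; rewrite brdKV1 cmp1l tens11 cmp1r //.
Qed.

Lemma Psi_QpeF : Psi (Q ∘ pe) = idm D [:: false; false].
Proof.
symmetry; apply: Psi_spec.
rewrite tens11 cmp1r tensMr cmpA zig2 cmp1l //.
Qed.

Lemma f_lin : f = s *: idm D [:: false; false] + (- t) *: fi.
Proof. by rewrite {1}f_Psi skein1 Psi_D !Psi_Z Psi_QpeF fi_Psi. Qed.

Lemma Hf : f ∘ f = (- t) *: idm D [:: false; false] + s *: f.
Proof.
rewrite {1}f_lin cmpDl !cmpZl brdK1 cmp1l addrC //.
Qed.

Lemma fi_hecke : fi = (s / t) *: idm D [:: false; false] + (- t^-1) *: f.
Proof.
rewrite [in RHS]f_lin scalerDr !scalerA mulrNN mulVf ?tt_neq0 // scale1r addrA -scalerDl.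
have -> : s / t + - t^-1 * s = 0 by ring.
by rewrite scale0r add0r.
Qed.

Lemma tens_r0 x y (g : Hom D [:: x; y] [::]) : g ⊗ idm D [::] = g.
Proof. by have := tens0r_ax g; rewrite castH_refl. Qed.

Lemma slide0 x y x' y' (g : Hom D [:: x; y] [::]) (h : Hom D [:: x'; y'] [::]) :
  h ∘ (g ⊗ idm D [:: x'; y']) = g ∘ (idm D [:: x; y] ⊗ h).
Proof.
transitivity (g ⊗ h).
  by rewrite -[in RHS](cmp1l g) -[in RHS](cmp1r h) tensM tens0l.
by rewrite -[in LHS](cmp1r g) -[in LHS](cmp1l h) tensM tens_r0.
Qed.

Lemma unbendF (g : Hom D [:: false; true] [::]) :
  pe ∘ (((g ⊗ I false) ∘ (I false ⊗ Q)) ⊗ I true) = g.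
Proof.
rewrite tensMl; tAr; tAr; rewrite tens11 cmpA slide0 -cmpA.
rewrite -(tens11 [:: false] [:: true]); tAr; tM.
by rewrite cmp1l zig1 tens11 cmp1r.
Qed.

Lemma unbendT (g : Hom D [:: true; false] [::]) :
  qe ∘ (((g ⊗ I true) ∘ (I true ⊗ P)) ⊗ I false) = g.
Proof.
rewrite tensMl; tAr; tAr; rewrite tens11 cmpA slide0 -cmpA.
rewrite -(tens11 [:: true] [:: false]); tAr; tM.
by rewrite cmp1l zig4 tens11 cmp1r.
Qed.

Lemma qe_e : qe ∘ e = kappa *: pe.
Proof.
rewrite -(unbendF (qe ∘ e)) -[in RHS](unbendF (kappa *: pe)).
apply: (congr1 (fun h : Hom D [:: false] [:: false] => pe ∘ (h ⊗ I true))).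
rewrite tensZl cmpZl zig2 tensMl -cmpA.
have H1 := cupR false Q. rewrite -/e -/f in H1.
have H1' : e ⊗ I false ∘ I false ⊗ Q = (I true ⊗ fi) ∘ Q ⊗ I false.
  by rewrite -H1 !cmpA; tM; rewrite cmp1l brdK1 tens11 cmp1l.
rewrite H1' cmpA.
have H2 := capL false qe.
have H2' : qe ⊗ I false ∘ I true ⊗ fi = (I false ⊗ qe) ∘ d ⊗ I false.
  by rewrite H2 -!cmpA; tM; rewrite cmp1l brdKV1 tens11 cmp1r.
rewrite H2' -cmpA; tM; rewrite cmp1l dQ tensZl cmpZr zig4 //.
Qed.

Lemma pe_d : pe ∘ d = kappa' *: qe.
Proof.
rewrite -(unbendT (pe ∘ d)) -[in RHS](unbendT (kappa' *: qe)).
apply: (congr1 (fun h : Hom D [:: true] [:: true] => qe ∘ (h ⊗ I false))).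
rewrite tensZl cmpZl zig3 tensMl -cmpA.
have H1 := cupR true P.
have H1' : d ⊗ I true ∘ I true ⊗ P = (I false ⊗ ci) ∘ P ⊗ I true.
  by rewrite -H1 !cmpA; tM; rewrite cmp1l brdK1 tens11 cmp1l.
rewrite H1' cmpA.
have H2 := capL true pe.
have H2' : pe ⊗ I true ∘ I false ⊗ ci = (I true ⊗ pe) ∘ e ⊗ I true.
  by rewrite H2 -!cmpA; tM; rewrite cmp1l brdKV1 tens11 cmp1r.
rewrite H2' -cmpA; tM; rewrite cmp1l eP tensZl cmpZr zig1 //.
Qed.

Lemma ed : e ∘ d = t^-1 *: ((s * kappa') *: (Q ∘ qe)) + (- t^-1) *: idm D [:: true; false].
Proof.
apply: solve_lin; first exact: tt_neq0.
have := congr1 (fun h => h ∘ d) skein1; rewrite /= brdK1 => ->.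
by rewrite cmpDl !cmpZl -cmpA pe_d cmpZr scalerA.
Qed.

Lemma de : d ∘ e = t^-1 *: ((s * kappa) *: (P ∘ pe)) + (- t^-1) *: idm D [:: false; true].
Proof.
apply: solve_lin; first exact: tt_neq0.
have := congr1 (fun h => d ∘ h) skein1; rewrite /= brdKV1 => ->.
by rewrite cmpDr !cmpZr cmpA dQ cmpZl scalerA.
Qed.

Lemma tens_r0' x y (g : Hom D [:: x] [:: y]) : g ⊗ idm D [::] = g.
Proof. by have := tens0r_ax g; rewrite castH_refl. Qed.

Local Notation th := (alpha * beta * kappa * kappa').

Lemma curl1 : (pe ⊗ I true) ∘ (I false ⊗ c) ∘ (P ⊗ I true) = kappa^-1 *: I true.
Proof.
rewrite c_lin tensDr !tensZr cmpDl !cmpZl cmpDr !cmpZr tens11 cmp1l.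
tMg constr:(pe); rewrite cmp1l pP tensZl tens0l.
have H2 := capL true pe.
have H2' : pe ⊗ I true ∘ I false ⊗ ci = (I true ⊗ pe) ∘ e ⊗ I true.
  by rewrite H2 -!cmpA; tM; rewrite cmp1l brdKV1 tens11 cmp1r.
rewrite cmpA H2' -cmpA; tMg' constr:(I true); rewrite cmp1l eP tensZl cmpZr zig1 !scalerA.
apply: lin2; field; rewrite Hk Hs //.
Qed.

Lemma curl2 : (I true ⊗ qe) ∘ (c ⊗ I false) ∘ (I true ⊗ Q) = kappa'^-1 *: I true.
Proof.
rewrite c_lin tensDl !tensZl cmpDl !cmpZl cmpDr !cmpZr tens11 cmp1l.
tMg constr:(I true); rewrite cmp1l qQ tensZr tens_r0'.
have H2 := capR true qe.
have H2' : I true ⊗ qe ∘ ci ⊗ I false = (qe ⊗ I true) ∘ I true ⊗ d.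
  by rewrite H2 -!cmpA; tM; rewrite cmp1l brdKV1 tens11 cmp1r.
rewrite cmpA H2' -cmpA; tMg constr:(I true); rewrite cmp1l dQ tensZr cmpZr zig3 !scalerA.
apply: lin2; field; rewrite Hk' Hs //.
Qed.

Lemma curlF1 : (qe ⊗ I false) ∘ (I true ⊗ f) ∘ (Q ⊗ I false) = kappa'^-1 *: I false.
Proof.
rewrite f_lin tensDr !tensZr cmpDl !cmpZl cmpDr !cmpZr tens11 cmp1l.
tMg constr:(qe); rewrite cmp1l qQ tensZl tens0l.
have H2 := capL false qe.
have H2' : qe ⊗ I false ∘ I true ⊗ fi = (I false ⊗ qe) ∘ d ⊗ I false.
  by rewrite H2 -!cmpA; tM; rewrite cmp1l brdKV1 tens11 cmp1r.
rewrite cmpA H2' -cmpA; tMg constr:(d); rewrite cmp1l dQ tensZl cmpZr zig4 !scalerA.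
apply: lin2; field; rewrite Hk' Hs //.
Qed.

Lemma curlF2 : (I false ⊗ pe) ∘ (f ⊗ I true) ∘ (I false ⊗ P) = kappa^-1 *: I false.
Proof.
rewrite f_lin tensDl !tensZl cmpDl !cmpZl cmpDr !cmpZr tens11 cmp1l.
tMg constr:(I false); rewrite cmp1l pP tensZr tens_r0'.
have H2 := capR false pe.
have H2' : I false ⊗ pe ∘ fi ⊗ I true = (pe ⊗ I false) ∘ I false ⊗ e.
  by rewrite H2 -!cmpA; tM; rewrite cmp1l brdKV1 tens11 cmp1r.
rewrite cmpA H2' -cmpA; tMg constr:(I false); rewrite cmp1l eP tensZr cmpZr zig2 !scalerA.
apply: lin2; field; rewrite Hk Hs //.
Qed.

Lemma braid x y z :
  (brd D [:: y] [:: z] ⊗ I x) ∘ (I y ⊗ brd D [:: x] [:: z]) ∘ (brd D [:: x] [:: y] ⊗ I z) =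
  (I z ⊗ brd D [:: x] [:: y]) ∘ (brd D [:: x] [:: z] ⊗ I y) ∘ (I x ⊗ brd D [:: y] [:: z]).
Proof.
have := brdN (I x) (brd D [:: y] [:: z]); rewrite !hex1 => H.
by rewrite [RHS]cmpA H.
Qed.

End Derived.

End P2.
Import P2.

Module P3.
Section Main.
Variables (D : BData) (alpha beta kappa kappa' u v : CC).
Hypothesis HB : isB D alpha beta kappa kappa'.
Hypotheses (Ha : alpha != 0) (Hb : beta != 0) (Hk : kappa != 0) (Hk' : kappa' != 0)
  (Hs : alpha + beta != 0).
Hypothesis Huv : u * v = - (alpha * beta * kappa * kappa').

Local Notation "g '∘' f" := (cmp g f) (at level 46, right associativity).
Local Notation "f '⊗' g" := (tens f g) (at level 35).
Local Notation I x := (idm D [:: x]).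
Local Notation c := (brd D [:: true] [:: true]).
Local Notation d := (brd D [:: true] [:: false]).
Local Notation e := (brd D [:: false] [:: true]).
Local Notation f := (brd D [:: false] [:: false]).
Local Notation ci := (brdinv D [:: true] [:: true]).
Local Notation di := (brdinv D [:: true] [:: false]).
Local Notation ei := (brdinv D [:: false] [:: true]).
Local Notation fi := (brdinv D [:: false] [:: false]).
Local Notation P := (coev_bw D).
Local Notation Q := (coev_wb D).
Local Notation pe := (ev_bw D).
Local Notation qe := (ev_wb D).
Local Notation s := (alpha + beta).
Local Notation t := (alpha * beta).
Local Notation cmp1l := (P1.cmp1l HB).
Local Notation cmp1r := (P1.cmp1r HB).
Local Notation cmpA := (P1.cmpA HB).
Local Notation cmpLl := (P1.cmpLl HB).
Local Notation cmpLr := (P1.cmpLr HB).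
Local Notation tens11 := (P1.tens11 HB).
Local Notation tensM := (P1.tensM HB).
Local Notation tens0l := (P1.tens0l HB).
Local Notation tens0r_ax := (P1.tens0r_ax HB).
Local Notation tensA_ax := (P1.tensA_ax HB).
Local Notation tensLl := (P1.tensLl HB).
Local Notation tensLr := (P1.tensLr HB).
Local Notation brdK := (P1.brdK HB).
Local Notation brdKV := (P1.brdKV HB).
Local Notation brdN := (P1.brdN HB).
Local Notation hex1 := (P1.hex1 HB).
Local Notation hex2 := (P1.hex2 HB).
Local Notation zig1 := (P1.zig1 HB).
Local Notation zig2 := (P1.zig2 HB).
Local Notation zig3 := (P1.zig3 HB).
Local Notation zig4 := (P1.zig4 HB).
Local Notation cmpDl := (P1.cmpDl HB).
Local Notation cmp0l := (P1.cmp0l HB).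
Local Notation cmpZl := (P1.cmpZl HB).
Local Notation cmpDr := (P1.cmpDr HB).
Local Notation cmp0r := (P1.cmp0r HB).
Local Notation cmpZr := (P1.cmpZr HB).
Local Notation cmpNl := (P1.cmpNl HB).
Local Notation cmpNr := (P1.cmpNr HB).
Local Notation cmpBl := (P1.cmpBl HB).
Local Notation cmpBr := (P1.cmpBr HB).
Local Notation tensDl := (P1.tensDl HB).
Local Notation tens0l' := (P1.tens0l' HB).
Local Notation tensZl := (P1.tensZl HB).
Local Notation tensDr := (P1.tensDr HB).
Local Notation tens0r' := (P1.tens0r' HB).
Local Notation tensZr := (P1.tensZr HB).
Local Notation tensNl := (P1.tensNl HB).
Local Notation tensNr := (P1.tensNr HB).
Local Notation tensBl := (P1.tensBl HB).
Local Notation tensBr := (P1.tensBr HB).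
Local Notation tensMl := (P1.tensMl HB).
Local Notation tensMr := (P1.tensMr HB).
Local Notation interchange := (P1.interchange HB).
Local Notation brd_nil_r := (P1.brd_nil_r HB).
Local Notation brd_nil_l := (P1.brd_nil_l HB).
Local Notation capL := (P1.capL HB).
Local Notation capR := (P1.capR HB).
Local Notation cupL := (P1.cupL HB).
Local Notation cupR := (P1.cupR HB).
Local Notation Hc := (P2.Hc HB).
Local Notation dQ := (P2.dQ HB).
Local Notation eP := (P2.eP HB).
Local Notation qQ := (P2.qQ HB).
Local Notation pP := (P2.pP HB).
Local Notation brdK1 := (P2.brdK1 HB).
Local Notation brdKV1 := (P2.brdKV1 HB).
Local Notation ci_hecke := (P2.ci_hecke HB).
Local Notation c_lin := (P2.c_lin HB).
Local Notation fi_hecke := (P2.fi_hecke HB).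
Local Notation f_lin := (P2.f_lin HB).
Local Notation Hf := (P2.Hf HB).
Local Notation ed := (P2.ed HB).
Local Notation de := (P2.de HB).
Local Notation curl1 := (P2.curl1 HB).
Local Notation curl2 := (P2.curl2 HB).
Local Notation curlF1 := (P2.curlF1 HB).
Local Notation curlF2 := (P2.curlF2 HB).
Local Notation qe_e := (P2.qe_e HB).
Local Notation pe_d := (P2.pe_d HB).
Local Notation braid := (P2.braid HB).
Local Notation tens_r0 := (P2.tens_r0 HB).
Local Notation tens_r0' := (P2.tens_r0' HB).
Local Notation skein1 := (P2.skein1 HB).
Local Notation Rb := (Rbax D alpha beta u v).

Ltac tM := match goal with |- context [cmp (tens ?g ?g') (tens ?f ?f')] => rewrite -(tensM g f g' f') end.

Ltac tMg G := match goal with |- context [cmp (tens G ?g') (tens ?f ?f')] => rewrite -(tensM G f g' f') end.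

Lemma cmp_tail b c' d' (X : Hom D c' d') (Y : Hom D b c') (Z : Hom D b d') :
  X ∘ Y = Z -> forall a' (g : Hom D a' b), X ∘ (Y ∘ g) = Z ∘ g.
Proof. by move=> H a' g; rewrite cmpA H. Qed.

Lemma cmp_tail3 b c' d' e' (X : Hom D c' d') (Y : Hom D e' c') (Z : Hom D b e') (W : Hom D b d') :
  X ∘ (Y ∘ Z) = W -> forall a' (g : Hom D a' b), X ∘ (Y ∘ (Z ∘ g)) = W ∘ g.
Proof. by move=> H a' g; rewrite cmpA cmpA -(cmpA X) H. Qed.

Lemma u_neq0 : u != 0.
Proof.
apply/eqP => hu.
have H0 : alpha * beta * kappa * kappa' != 0 by rewrite !mulf_neq0.
by move: H0; rewrite -oppr_eq0 -Huv hu mul0r eqxx.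
Qed.

Lemma v_eq : v = - (alpha * beta * kappa * kappa') / u.
Proof. by rewrite -Huv mulrC mulKf // u_neq0. Qed.

Ltac expand := rewrite ?(tensDl, tensDr, tensZl, tensZr, cmpDl, cmpDr, cmpZl, cmpZr).

Lemma ybe_TTF z w : z != 1 -> w != v -> z * w != v ->
    cmp (tens (Rb true false w) (idm D [:: true]))
      (cmp (tens (idm D [:: true]) (Rb true false (z * w)))
            (tens (Rb true true z) (idm D [:: false])))
    =
    cmp (tens (idm D [:: false]) (Rb true true z))
      (cmp (tens (Rb true false (z * w)) (idm D [:: true]))
            (tens (idm D [:: true]) (Rb true false w))).
Proof.
move=> hz hw hzw.
rewrite /Rbax /=.
expand; rewrite !tens11 ?cmp1l ?cmp1r !tensMl !tensMr -!cmpA.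
rewrite -braid.
have SRb : (d ⊗ I true) ∘ (I true ⊗ P) = (I false ⊗ ci) ∘ (P ⊗ I true).
  by rewrite -(cupR true P) cmpA; tMg constr:(I false); rewrite cmp1l brdK1 tens11 cmp1l.
have SRc : (qe ⊗ I true) ∘ (I true ⊗ d) = (I true ⊗ qe) ∘ (ci ⊗ I false).
  by rewrite (capR true qe) -!cmpA; tMg constr:(c); rewrite cmp1l brdKV1 tens11 cmp1r.
have Mc1 : (I false ⊗ c) ∘ (I false ⊗ ci) = idm D [:: false; true; true].
  by tM; rewrite cmp1l brdKV1 tens11.
have Mc2 : (ci ⊗ I false) ∘ (c ⊗ I false) = idm D [:: true; true; false].
  by tM; rewrite cmp1l brdK1 tens11.
rewrite ?(cmp_tail SRb) ?SRb ?(cmp_tail SRc) ?SRc ?(cmp_tail zig3) ?zig3 -?cmpA.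
rewrite ?(cmp_tail Mc1) ?Mc1 ?(cmp_tail Mc2) ?Mc2 ?cmp1l ?cmp1r.
rewrite ci_hecke //; expand; rewrite ?tens11 ?cmp1l ?cmp1r.
set B0 := (d ⊗ I true ∘ I true ⊗ d ∘ c ⊗ I false).
set B1 := (d ⊗ I true ∘ I true ⊗ d).
set Fc := (P ⊗ I true ∘ I true ⊗ qe ∘ c ⊗ I false).
set cFc := (I false ⊗ c ∘ P ⊗ I true ∘ I true ⊗ qe ∘ c ⊗ I false).
set Fb := (P ⊗ I true ∘ I true ⊗ qe).
set cF := (I false ⊗ c ∘ Fb).
lin_reify [:: B0; B1; Fb; Fc; cF; cFc].
have hz1 : z - 1 != 0 by rewrite subr_eq0.
have hw1 : w - v != 0 by rewrite subr_eq0.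
have hzw1 : z * w - v != 0 by rewrite subr_eq0.
by case=> [|[|[|[|[|[|i]]]]]] //= _; field; rewrite ?hz1 ?hw1 ?hzw1 ?Ha ?Hb ?Hs ?Hk ?Hk'.
Qed.

Lemma ybe_FTT z w : z != u -> w != 1 -> z * w != u ->
    cmp (tens (Rb true true w) (idm D [:: false]))
      (cmp (tens (idm D [:: true]) (Rb false true (z * w)))
            (tens (Rb false true z) (idm D [:: true])))
    =
    cmp (tens (idm D [:: true]) (Rb false true z))
      (cmp (tens (Rb false true (z * w)) (idm D [:: true]))
            (tens (idm D [:: false]) (Rb true true w))).
Proof.
move=> hz hw hzw.
rewrite /Rbax /=.
expand; rewrite !tens11 ?cmp1l ?cmp1r !tensMl !tensMr -!cmpA.
rewrite -braid.
have S1 : (I true ⊗ e) ∘ (Q ⊗ I true) = (ci ⊗ I false) ∘ (I true ⊗ Q).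
  by rewrite -(cupL true Q) cmpA; tMg constr:(ci); rewrite cmp1l brdK1 tens11 cmp1l.
have S2 : (I true ⊗ pe) ∘ (e ⊗ I true) = (pe ⊗ I true) ∘ (I false ⊗ ci).
  by rewrite (capL true pe) -!cmpA; tMg constr:(I false); rewrite cmp1l brdKV1 tens11 cmp1r.
have M1 : (c ⊗ I false) ∘ (ci ⊗ I false) = idm D [:: true; true; false].
  by tM; rewrite cmp1l brdKV1 tens11.
have M2 : (I false ⊗ ci) ∘ (I false ⊗ c) = idm D [:: false; true; true].
  by tM; rewrite cmp1l brdK1 tens11.
rewrite ?(cmp_tail S1) ?S1 ?(cmp_tail S2) ?S2 ?(cmp_tail zig1) ?zig1 -?cmpA.
rewrite ?(cmp_tail M1) ?M1 ?(cmp_tail M2) ?M2 ?cmp1l ?cmp1r.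
rewrite ci_hecke //; expand; rewrite ?tens11 ?cmp1l ?cmp1r.
set B0 := (c ⊗ I false ∘ I true ⊗ e ∘ e ⊗ I true).
set B1 := (I true ⊗ e ∘ e ⊗ I true).
set Fc := (I true ⊗ Q ∘ pe ⊗ I true ∘ I false ⊗ c).
set cFc := (c ⊗ I false ∘ I true ⊗ Q ∘ pe ⊗ I true ∘ I false ⊗ c).
set Fb := (I true ⊗ Q ∘ pe ⊗ I true).
set cF := (c ⊗ I false ∘ Fb).
lin_reify [:: B0; B1; Fb; Fc; cF; cFc].
have hz1 : z - u != 0 by rewrite subr_eq0.
have hw1 : w - 1 != 0 by rewrite subr_eq0.
have hzw1 : z * w - u != 0 by rewrite subr_eq0.
by case=> [|[|[|[|[|[|i]]]]]] //= _; field; rewrite ?hz1 ?hw1 ?hzw1 ?Ha ?Hb ?Hs ?Hk ?Hk'.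
Qed.

Lemma ybe_FFT z w : z != 1 -> w != u -> z * w != u ->
    cmp (tens (Rb false true w) (idm D [:: false]))
      (cmp (tens (idm D [:: false]) (Rb false true (z * w)))
            (tens (Rb false false z) (idm D [:: true])))
    =
    cmp (tens (idm D [:: true]) (Rb false false z))
      (cmp (tens (Rb false true (z * w)) (idm D [:: false]))
            (tens (idm D [:: false]) (Rb false true w))).
Proof.
move=> hz hw hzw.
rewrite /Rbax /=.
expand; rewrite !tens11 ?cmp1l ?cmp1r !tensMl !tensMr -!cmpA.
rewrite -braid.
have S1 : (pe ⊗ I false) ∘ (I false ⊗ e) = (I false ⊗ pe) ∘ (fi ⊗ I true).
  by rewrite (capR false pe) -!cmpA; tMg constr:(f); rewrite cmp1l brdKV1 tens11 cmp1r.
have S2 : (e ⊗ I false) ∘ (I false ⊗ Q) = (I true ⊗ fi) ∘ (Q ⊗ I false).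
  by rewrite -(cupR false Q) cmpA; tMg constr:(I true); rewrite cmp1l brdK1 tens11 cmp1l.
have M1 : (I true ⊗ f) ∘ (I true ⊗ fi) = idm D [:: true; false; false].
  by tM; rewrite cmp1l brdKV1 tens11.
have M2 : (fi ⊗ I true) ∘ (f ⊗ I true) = idm D [:: false; false; true].
  by tM; rewrite cmp1l brdK1 tens11.
rewrite ?(cmp_tail S1) ?S1 ?(cmp_tail S2) ?S2 ?(cmp_tail zig2) ?zig2 -?cmpA.
rewrite ?(cmp_tail M1) ?M1 ?(cmp_tail M2) ?M2 ?cmp1l ?cmp1r.
rewrite fi_hecke //; expand; rewrite ?tens11 ?cmp1l ?cmp1r.
set B0 := (e ⊗ I false ∘ I false ⊗ e ∘ f ⊗ I true).
set B1 := (e ⊗ I false ∘ I false ⊗ e).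
set Fc := (Q ⊗ I false ∘ I false ⊗ pe ∘ f ⊗ I true).
set cFc := (I true ⊗ f ∘ Q ⊗ I false ∘ I false ⊗ pe ∘ f ⊗ I true).
set Fb := (Q ⊗ I false ∘ I false ⊗ pe).
set cF := (I true ⊗ f ∘ Fb).
lin_reify [:: B0; B1; Fb; Fc; cF; cFc].
have hz1 : z - 1 != 0 by rewrite subr_eq0.
have hw1 : w - u != 0 by rewrite subr_eq0.
have hzw1 : z * w - u != 0 by rewrite subr_eq0.
by case=> [|[|[|[|[|[|i]]]]]] //= _; field; rewrite ?hz1 ?hw1 ?hzw1 ?Ha ?Hb ?Hs ?Hk ?Hk'.
Qed.

Lemma ybe_TFF z w : z != v -> w != 1 -> z * w != v ->
    cmp (tens (Rb false false w) (idm D [:: true]))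
      (cmp (tens (idm D [:: false]) (Rb true false (z * w)))
            (tens (Rb true false z) (idm D [:: false])))
    =
    cmp (tens (idm D [:: false]) (Rb true false z))
      (cmp (tens (Rb true false (z * w)) (idm D [:: false]))
            (tens (idm D [:: true]) (Rb false false w))).
Proof.
move=> hz hw hzw.
rewrite /Rbax /=.
expand; rewrite !tens11 ?cmp1l ?cmp1r !tensMl !tensMr -!cmpA.
rewrite -braid.
have S1 : (I false ⊗ d) ∘ (P ⊗ I false) = (fi ⊗ I true) ∘ (I false ⊗ P).
  by rewrite -(cupL false P) cmpA; tMg constr:(fi); rewrite cmp1l brdK1 tens11 cmp1l.
have S2 : (I false ⊗ qe) ∘ (d ⊗ I false) = (qe ⊗ I false) ∘ (I true ⊗ fi).
  by rewrite (capL false qe) -!cmpA; tMg constr:(I true); rewrite cmp1l brdKV1 tens11 cmp1r.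
have M1 : (f ⊗ I true) ∘ (fi ⊗ I true) = idm D [:: false; false; true].
  by tM; rewrite cmp1l brdKV1 tens11.
have M2 : (I true ⊗ fi) ∘ (I true ⊗ f) = idm D [:: true; false; false].
  by tM; rewrite cmp1l brdK1 tens11.
rewrite ?(cmp_tail S1) ?S1 ?(cmp_tail S2) ?S2 ?(cmp_tail zig4) ?zig4 -?cmpA.
rewrite ?(cmp_tail M1) ?M1 ?(cmp_tail M2) ?M2 ?cmp1l ?cmp1r.
rewrite fi_hecke //; expand; rewrite ?tens11 ?cmp1l ?cmp1r.
set B0 := (f ⊗ I true ∘ I false ⊗ d ∘ d ⊗ I false).
set B1 := (I false ⊗ d ∘ d ⊗ I false).
set Fc := (I false ⊗ P ∘ qe ⊗ I false ∘ I true ⊗ f).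
set cFc := (f ⊗ I true ∘ I false ⊗ P ∘ qe ⊗ I false ∘ I true ⊗ f).
set Fb := (I false ⊗ P ∘ qe ⊗ I false).
set cF := (f ⊗ I true ∘ Fb).
lin_reify [:: B0; B1; Fb; Fc; cF; cFc].
have hz1 : z - v != 0 by rewrite subr_eq0.
have hw1 : w - 1 != 0 by rewrite subr_eq0.
have hzw1 : z * w - v != 0 by rewrite subr_eq0.
by case=> [|[|[|[|[|[|i]]]]]] //= _; field; rewrite ?hz1 ?hw1 ?hzw1 ?Ha ?Hb ?Hs ?Hk ?Hk'.
Qed.

Lemma ybe_TFT z w : z != v -> w != u -> z * w != 1 ->
    cmp (tens (Rb false true w) (idm D [:: true]))
      (cmp (tens (idm D [:: false]) (Rb true true (z * w)))
            (tens (Rb true false z) (idm D [:: true])))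
    =
    cmp (tens (idm D [:: true]) (Rb true false z))
      (cmp (tens (Rb true true (z * w)) (idm D [:: false]))
            (tens (idm D [:: true]) (Rb false true w))).
Proof.
move=> hz hw hzw.
rewrite /Rbax /=.
expand; rewrite !tens11 ?cmp1l ?cmp1r !tensMl !tensMr -!cmpA.
rewrite -braid.
have N1 : (e ⊗ I true) ∘ (I false ⊗ c) ∘ (P ⊗ I true) = I true ⊗ P by exact: cupL.
have N2 : (pe ⊗ I true) ∘ (I false ⊗ c) ∘ (d ⊗ I true) = I true ⊗ pe by rewrite (capR true pe).
have N3 : (I true ⊗ d) ∘ (c ⊗ I false) ∘ (I true ⊗ Q) = Q ⊗ I true by exact: cupR.
have N4 : (I true ⊗ qe) ∘ (c ⊗ I false) ∘ (I true ⊗ e) = qe ⊗ I true by rewrite (capL true qe).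
rewrite ?(cmp_tail3 N1) ?N1 ?(cmp_tail3 N2) ?N2 ?(cmp_tail3 N3) ?N3 ?(cmp_tail3 N4) ?N4.
rewrite ?(cmp_tail3 (curl1 Hk Hs)) ?(curl1 Hk Hs) ?(cmp_tail3 (curl2 Hk' Hs)) ?(curl2 Hk' Hs).
expand; rewrite ?cmp1l ?cmp1r -?cmpA.
have R1 : (e ⊗ I true) ∘ (d ⊗ I true) = t^-1 *: ((s * kappa') *: ((Q ⊗ I true) ∘ (qe ⊗ I true))) + (- t^-1) *: idm D [:: true; false; true].
  by tM; rewrite cmp1l ed // tensDl !tensZl tensMl tens11.
have R2 : (e ⊗ I true) ∘ (P ⊗ I true) = kappa' *: (Q ⊗ I true).
  by tM; rewrite cmp1l eP tensZl.
have R3 : (pe ⊗ I true) ∘ (d ⊗ I true) = kappa' *: (qe ⊗ I true).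
  by tM; rewrite cmp1l pe_d tensZl.
have R4 : (pe ⊗ I true) ∘ (P ⊗ I true) = ((alpha * beta * kappa * kappa' + 1) / (kappa * (alpha + beta))) *: I true.
  by tM; rewrite cmp1l pP tensZl tens0l.
have R5 : (I true ⊗ d) ∘ (I true ⊗ e) = t^-1 *: ((s * kappa) *: ((I true ⊗ P) ∘ (I true ⊗ pe))) + (- t^-1) *: idm D [:: true; false; true].
  by tM; rewrite cmp1l de // tensDr !tensZr tensMr tens11.
have R6 : (I true ⊗ d) ∘ (I true ⊗ Q) = kappa *: (I true ⊗ P).
  by tM; rewrite cmp1l dQ tensZr.
have R7 : (I true ⊗ qe) ∘ (I true ⊗ e) = kappa *: (I true ⊗ pe).
  by tM; rewrite cmp1l qe_e tensZr.
have R8 : (I true ⊗ qe) ∘ (I true ⊗ Q) = ((alpha * beta * kappa * kappa' + 1) / (kappa' * (alpha + beta))) *: I true.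
  by tM; rewrite cmp1l qQ tensZr tens_r0'.
rewrite ?(cmp_tail R1) ?R1 ?(cmp_tail R2) ?R2 ?(cmp_tail R3) ?R3 ?(cmp_tail R4) ?R4.
rewrite ?(cmp_tail R5) ?R5 ?(cmp_tail R6) ?R6 ?(cmp_tail R7) ?R7 ?(cmp_tail R8) ?R8.
expand; rewrite ?cmp1l ?cmp1r -?cmpA.
set B0 := (e ⊗ I true ∘ I false ⊗ c ∘ d ⊗ I true).
set Id := idm D [:: true; false; true].
set G1 := (Q ⊗ I true ∘ qe ⊗ I true).
set H2 := (I true ⊗ P ∘ I true ⊗ pe).
set K := (I true ⊗ P ∘ qe ⊗ I true).
set K' := (Q ⊗ I true ∘ I true ⊗ pe).
lin_reify [:: B0; Id; G1; H2; K; K'].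
have hz1 : z - v != 0 by rewrite subr_eq0.
have hw1 : w - u != 0 by rewrite subr_eq0.
have hzw1 : z * w - 1 != 0 by rewrite subr_eq0.
have hu := u_neq0.
rewrite v_eq in hz1 *.
have hz2 : z * u - - (alpha * beta * kappa * kappa') != 0.
  have -> : z * u - - (alpha * beta * kappa * kappa') = (z - - (alpha * beta * kappa * kappa') / u) * u.
    by field.
  by rewrite mulf_neq0.
by case=> [|[|[|[|[|[|i]]]]]] //= _; field; rewrite ?hz2 ?hw1 ?hzw1 ?Ha ?Hb ?Hs ?Hk ?Hk' ?hu.
Qed.

Lemma ybe_FTF z w : z != u -> w != v -> z * w != 1 ->
    cmp (tens (Rb true false w) (idm D [:: false]))
      (cmp (tens (idm D [:: true]) (Rb false false (z * w)))
            (tens (Rb false true z) (idm D [:: false])))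
    =
    cmp (tens (idm D [:: false]) (Rb false true z))
      (cmp (tens (Rb false false (z * w)) (idm D [:: true]))
            (tens (idm D [:: false]) (Rb true false w))).
Proof.
move=> hz hw hzw.
rewrite /Rbax /=.
expand; rewrite !tens11 ?cmp1l ?cmp1r !tensMl !tensMr -!cmpA.
rewrite -braid.
have N1 : (d ⊗ I false) ∘ (I true ⊗ f) ∘ (Q ⊗ I false) = I false ⊗ Q by exact: cupL.
have N2 : (qe ⊗ I false) ∘ (I true ⊗ f) ∘ (e ⊗ I false) = I false ⊗ qe by rewrite (capR false qe).
have N3 : (I false ⊗ e) ∘ (f ⊗ I true) ∘ (I false ⊗ P) = P ⊗ I false by exact: cupR.
have N4 : (I false ⊗ pe) ∘ (f ⊗ I true) ∘ (I false ⊗ d) = pe ⊗ I false by rewrite (capL false pe).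
rewrite ?(cmp_tail3 N1) ?N1 ?(cmp_tail3 N2) ?N2 ?(cmp_tail3 N3) ?N3 ?(cmp_tail3 N4) ?N4.
rewrite ?(cmp_tail3 (curlF1 Hk' Hs)) ?(curlF1 Hk' Hs) ?(cmp_tail3 (curlF2 Hk Hs)) ?(curlF2 Hk Hs).
expand; rewrite ?cmp1l ?cmp1r -?cmpA.
have R1 : (d ⊗ I false) ∘ (e ⊗ I false) = t^-1 *: ((s * kappa) *: ((P ⊗ I false) ∘ (pe ⊗ I false))) + (- t^-1) *: idm D [:: false; true; false].
  by tM; rewrite cmp1l de // tensDl !tensZl tensMl tens11.
have R2 : (d ⊗ I false) ∘ (Q ⊗ I false) = kappa *: (P ⊗ I false).
  by tM; rewrite cmp1l dQ tensZl.
have R3 : (qe ⊗ I false) ∘ (e ⊗ I false) = kappa *: (pe ⊗ I false).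
  by tM; rewrite cmp1l qe_e tensZl.
have R4 : (qe ⊗ I false) ∘ (Q ⊗ I false) = ((alpha * beta * kappa * kappa' + 1) / (kappa' * (alpha + beta))) *: I false.
  by tM; rewrite cmp1l qQ tensZl tens0l.
have R5 : (I false ⊗ e) ∘ (I false ⊗ d) = t^-1 *: ((s * kappa') *: ((I false ⊗ Q) ∘ (I false ⊗ qe))) + (- t^-1) *: idm D [:: false; true; false].
  by tM; rewrite cmp1l ed // tensDr !tensZr tensMr tens11.
have R6 : (I false ⊗ e) ∘ (I false ⊗ P) = kappa' *: (I false ⊗ Q).
  by tM; rewrite cmp1l eP tensZr.
have R7 : (I false ⊗ pe) ∘ (I false ⊗ d) = kappa' *: (I false ⊗ qe).
  by tM; rewrite cmp1l pe_d tensZr.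
have R8 : (I false ⊗ pe) ∘ (I false ⊗ P) = ((alpha * beta * kappa * kappa' + 1) / (kappa * (alpha + beta))) *: I false.
  by tM; rewrite cmp1l pP tensZr tens_r0'.
rewrite ?(cmp_tail R1) ?R1 ?(cmp_tail R2) ?R2 ?(cmp_tail R3) ?R3 ?(cmp_tail R4) ?R4.
rewrite ?(cmp_tail R5) ?R5 ?(cmp_tail R6) ?R6 ?(cmp_tail R7) ?R7 ?(cmp_tail R8) ?R8.
expand; rewrite ?cmp1l ?cmp1r -?cmpA.
set B0 := (d ⊗ I false ∘ I true ⊗ f ∘ e ⊗ I false).
set Id := idm D [:: false; true; false].
set H1 := (P ⊗ I false ∘ pe ⊗ I false).
set G2 := (I false ⊗ Q ∘ I false ⊗ qe).
set K := (I false ⊗ Q ∘ pe ⊗ I false).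
set K' := (P ⊗ I false ∘ I false ⊗ qe).
lin_reify [:: B0; Id; H1; G2; K; K'].
have hz1 : z - u != 0 by rewrite subr_eq0.
have hw1 : w - v != 0 by rewrite subr_eq0.
have hzw1 : z * w - 1 != 0 by rewrite subr_eq0.
have hu := u_neq0.
rewrite v_eq in hw1 *.
have hw2 : w * u - - (alpha * beta * kappa * kappa') != 0.
  have -> : w * u - - (alpha * beta * kappa * kappa') = (w - - (alpha * beta * kappa * kappa') / u) * u.
    by field.
  by rewrite mulf_neq0.
by case=> [|[|[|[|[|[|i]]]]]] //= _; field; rewrite ?hz1 ?hw2 ?hzw1 ?Ha ?Hb ?Hs ?Hk ?Hk' ?hu.
Qed.

End Main.

End P3.

Theorem lemma3p1p1 (D : BData) (alpha beta kappa kappa' u v : CC) :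
  alpha != 0 -> beta != 0 -> kappa != 0 -> kappa' != 0 -> alpha + beta != 0 ->
  isB D alpha beta kappa kappa' ->
  u * v = - (alpha * beta * kappa * kappa') ->
  forall (a b c : bool), ~~ ((a == b) && (b == c)) ->
  forall z w : CC,
    z != Rpole u v a b -> w != Rpole u v b c -> z * w != Rpole u v a c ->
    cmp (tens (Rbax D alpha beta u v b c w) (idm D [:: a]))
      (cmp (tens (idm D [:: b]) (Rbax D alpha beta u v a c (z * w)))
            (tens (Rbax D alpha beta u v a b z) (idm D [:: c])))
    =
    cmp (tens (idm D [:: c]) (Rbax D alpha beta u v a b z))
      (cmp (tens (Rbax D alpha beta u v a c (z * w)) (idm D [:: b]))
            (tens (idm D [:: a]) (Rbax D alpha beta u v b c w))).
Proof.
move=> Ha Hb Hk Hk' Hs HB Huv a b c Habc z w.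
case: a Habc; case: b; case: c => //= _; rewrite /Rpole /= => hz hw hzw.
all: first [ apply: (P3.ybe_TTF (kappa:=kappa) (kappa':=kappa')) | apply: (P3.ybe_TFT (kappa:=kappa) (kappa':=kappa')) | apply: (P3.ybe_TFF (kappa:=kappa) (kappa':=kappa'))
           | apply: (P3.ybe_FTT (kappa:=kappa) (kappa':=kappa')) | apply: (P3.ybe_FTF (kappa:=kappa) (kappa':=kappa')) | apply: (P3.ybe_FFT (kappa:=kappa) (kappa':=kappa')) ]; by [].
Qed.
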